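(* Let $T^\sigma=(T,\sigma)$ be a signed tree. Then $\dim(T)-\mathrm{ext}(T)\le \dim(T^\sigma)\le \dim(T)$; equivalently, $\mathrm{mdd}(T^\sigma)\le \mathrm{ext}(T)$.
   Context: A signed graph $\Sigma=(G,\sigma)$ consists of a finite simple connected graph $G=(V,E)$ and a signature $\sigma:E\to\{+1,-1\}$. In a signed tree every pair of vertices $u,v$ is joined by a unique path $P(u,v)$, and the signed distance is $d_\Sigma(u,v)=\sigma(P(u,v))\,d(u,v)$, where $d$ is the usual distance and $\sigma(P)$ is the product of edge signs of $P$. For an ordered subset $W=(w_1,\dots,w_k)$ of vertices, $r_\Sigma(v|W)=(d_\Sigma(v,w_1),\dots,d_\Sigma(v,w_k))$; $W$ is a resolving set if distinct vertices have distinct representations; $\dim(T^\sigma)$ is the minimum size of a resolving set, and $\dim(T)$ is defined analogously for the unsigned tree using $d$. The metric dimensional difference is $\mathrm{mdd}(T^\sigma)=\dim(T)-\dim(T^\sigma)$. Tree terminology: a leaf is a vertex of degree $1$; a major vertex is a vertex of degree at least $3$; a leaf $u$ is a terminal vertex of a major vertex $v$ if $d(u,v)<d(u,w)$ for every other major vertex $w$; an exterior major vertex is a major vertex having at least one terminal vertex; $\mathrm{ext}(T)$ is the number of exterior major vertices of $T$. *)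

(* Defs.v *)
From Stdlib Require Import ClassicalEpsilon.
From mathcomp Require Import all_boot all_order all_algebra.
Set Implicit Arguments. Unset Strict Implicit. Unset Printing Implicit Defensive.
Import GRing.Theory Num.Theory.

Section SignedTrees.
Variable T : finType.
Variable e : rel T.

Definition simple_graph := symmetric e /\ irreflexive e.

Definition connected_graph := forall x y : T, connect e x y.

Definition is_cycle (x : T) (s : seq T) : bool :=
  [&& uniq (x :: s), 2 <= size s, path e x s & e (last x s) x].

Definition acyclic := forall x s, ~~ is_cycle x s.

Definition is_tree := [/\ simple_graph, connected_graph & acyclic].

Definition is_uv_path (u v : T) (s : seq T) : Prop :=
  [&& uniq (u :: s), path e u s & last u s == v].

(* the path P(u,v) (unique when e is a tree), chosen by epsilon;
   it is given as the list of vertices after u *)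
Definition tpath (u v : T) : seq T :=
  epsilon (inhabits [::]) (is_uv_path u v).

Definition tdist (u v : T) : nat := size (tpath u v).

Definition udist (u v : T) : int := (tdist u v)%:Z.

Variable neg : T -> T -> bool.  (* signature: neg x y = true iff sigma(xy) = -1 *)

Definition signature := forall x y, e x y -> neg x y = neg y x.

Definition esign (x y : T) : int := if neg x y then (-1)%R else 1%R.

Definition path_sign (u : T) (s : seq T) : int :=
  (\prod_(p <- zip (u :: s) s) esign p.1 p.2)%R.

Definition sdist (u v : T) : int := (path_sign u (tpath u v) * (tdist u v)%:Z)%R.

End SignedTrees.

Section MetricDim.
Variable T : finType.

Definition resolving (d : T -> T -> int) (W : {set T}) : bool :=
  [forall u, forall v, [forall w in W, d u w == d v w] ==> (u == v)].

Definition mdim (d : T -> T -> int) : nat :=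
  \big[minn/#|T|]_(W : {set T} | resolving d W) #|W|.

Variable e : rel T.

Definition deg (v : T) : nat := #|[set w | e v w]|.
Definition leaf (v : T) : bool := deg v == 1.
Definition major (v : T) : bool := 3 <= deg v.

Definition terminal (u v : T) : bool :=
  [&& leaf u, major v &
      [forall w, (major w && (w != v)) ==> (tdist e u v < tdist e u w)]].

Definition exterior_major (v : T) : bool := major v && [exists u, terminal u v].

Definition ext : nat := #|[set v | exterior_major v]|.

End MetricDim.

(* Main.v *)
Require Import Defs.
From Stdlib Require Import ClassicalEpsilon.
From mathcomp Require Import all_boot all_order all_algebra zify.
Set Implicit Arguments. Unset Strict Implicit. Unset Printing Implicit Defensive.

Lemma last_rev_belast (T : Type) (y : T) t : last (last y t) (rev (belast y t)) = y.
Proof. by case: t => // z t'; rewrite /= rev_cons last_rcons. Qed.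

Section Tree.
Variable T : finType.
Variable e : rel T.
Hypothesis eS : symmetric e.
Hypothesis eirr : irreflexive e.
Hypothesis econn : connected_graph e.
Hypothesis eacyc : acyclic e.

Local Notation tp := (tpath e).
Local Notation td := (tdist e).

Lemma exists_path u v : exists s, is_uv_path e u v s.
Proof.
have /connectP [p pp ->] := econn u v.
case: (shortenP pp) => p' pp' up' _; exists p'.
by rewrite /is_uv_path up' pp' eqxx.
Qed.

Lemma tp_spec u v : is_uv_path e u v (tp u v).
Proof. rewrite /tpath; apply: epsilon_spec; exact: exists_path. Qed.

Lemma uv_unique u v s t : is_uv_path e u v s -> is_uv_path e u v t -> s = t.
Proof.
elim: s u t => [|x s IH] u [|y t] //.
- move=> /and3P [_ _ /eqP /= uv] /and3P [ut _ /eqP lt].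
  move: ut => /= /andP [/negP []]; rewrite uv -lt /=; exact: mem_last.
- move=> /and3P [ut _ /eqP lt] /and3P [_ _ /eqP /= uv].
  move: ut => /= /andP [/negP []]; rewrite uv -lt /=; exact: mem_last.
move=> /and3P [us ps /eqP ls] /and3P [ut pt /eqP lt].
case: (eqVneq x y) => [exy|nxy].
  subst y; congr (_ :: _); apply: (IH x).
    apply/and3P; split; [by case/andP: us|by case/andP: ps|by rewrite -ls].
  apply/and3P; split; [by case/andP: ut|by case/andP: pt|by rewrite -lt].
move: ps pt => /= /andP [eux pxs] /andP [euy pyt].
move: ls lt => /= ls lt.
set q := s ++ rev (belast y t).
have pq : path e x q.
  rewrite cat_path pxs /= ls -lt rev_path.
  by rewrite (@eq_path _ _ e) // => a b /=; rewrite eS.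
have lq : last x q = y by rewrite last_cat ls -lt last_rev_belast.
have uq : u \notin q.
  rewrite mem_cat negb_or mem_rev; apply/andP; split.
    by move: us => /= /andP [] /norP [].
  apply/negP => /mem_belast H; move: ut => /= /andP [/negP []]; exact: H.
move: lq; case: (shortenP pq) => q' pq' uq' sq lq'.
case/negP: (eacyc u (x :: q')).
rewrite /is_cycle.
have ux : u != x by move: us => /= /andP [] /norP [].
have uq'' : u \notin q' by apply/negP => /sq; apply/negP.
apply/and4P; split.
- rewrite /= in_cons negb_or ux uq''; exact: uq'.
- by case: q' lq' {pq' uq' sq uq''} => [/= xy|]; [rewrite xy eqxx in nxy|].
- by rewrite /= eux pq'.
- by rewrite /= lq' eS.
Qed.


Lemma tp_unique u v s : is_uv_path e u v s -> tp u v = s.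
Proof. by move=> H; apply: (uv_unique (tp_spec u v) H). Qed.

Lemma tp_refl u : tp u u = [::].
Proof. by apply: tp_unique; rewrite /is_uv_path /= eqxx. Qed.

Lemma tp_edge u v : e u v -> tp u v = [:: v].
Proof.
move=> euv; apply: tp_unique; rewrite /is_uv_path /= euv eqxx !andbT in_cons orbF.
by apply/eqP => uv; rewrite uv eirr in euv.
Qed.

Lemma tp_last u v : last u (tp u v) = v.
Proof. by case/and3P: (tp_spec u v) => _ _ /eqP. Qed.

Lemma td0 u v : td u v = 0 -> u = v.
Proof. by rewrite /tdist => /size0nil H; rewrite -(tp_last u v) H. Qed.

Lemma tp_cons u w y s : tp u w = y :: s -> e u y /\ tp y w = s.
Proof.
move=> H; case/and3P: (tp_spec u w); rewrite H /= => /andP [_ us] /andP [euy ps] /eqP ls.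
split => //; apply: tp_unique; by rewrite /is_uv_path /= us ps ls eqxx.
Qed.

Lemma tp_ne u v : u != v -> exists y s, tp u v = y :: s.
Proof.
move=> uv; case H: (tp u v) => [|y s]; last by exists y, s.
by have := tp_last u v; rewrite H /= => E; rewrite E eqxx in uv.
Qed.

Lemma td_sym u v : td v u = td u v.
Proof.
rewrite /tdist; set s := tp u v.
have -> : tp v u = rev (belast u s).
  apply: tp_unique; case/and3P: (tp_spec u v) => us ps /eqP ls.
  rewrite /is_uv_path; apply/and3P; split.
  - by rewrite -ls -rev_rcons -lastI rev_uniq.
  - rewrite -ls rev_path.
    by rewrite (@eq_path _ _ e) // => a b /=; rewrite eS.
  - by rewrite -ls last_rev_belast.
by rewrite size_rev size_belast.
Qed.

Lemma tp_split x y w : e x y -> tp x w = y :: tp y w \/ tp y w = x :: tp x w.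
Proof.
move=> exy; case H: (tp x w) => [|z s].
  right; apply: tp_unique; have := tp_last x w; rewrite H /= => xw.
  rewrite /is_uv_path /= in_cons orbF eS exy xw eqxx !andbT.
  by rewrite -xw; apply/eqP => yx; rewrite yx eirr in exy.
case: (eqVneq z y) => [zy|nzy].
  by left; subst z; case: (tp_cons H) => _ ->.
right; apply: tp_unique; rewrite -H.
case/and3P: (tp_spec x w) => us ps ls.
have xy : y != x by apply/eqP => yx; rewrite yx eirr in exy.
rewrite /is_uv_path; apply/and3P; split; last by [].
  2: by rewrite /= eS exy ps.
rewrite cons_uniq us andbT in_cons negb_or xy /=.
apply/negP => ys; rewrite H in ys us ps.
have ys' : y \in s by move: ys; rewrite in_cons eq_sym (negbTE nzy).
case/splitPr: ys' us ps => p1 p2 us ps.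
have E : [:: x, z & p1 ++ y :: p2] = (x :: z :: rcons p1 y) ++ p2 by rewrite /= cat_rcons.
case/negP: (eacyc x (z :: rcons p1 y)); rewrite /is_cycle.
apply/and4P; split.
- by move: us; rewrite E cat_uniq => /andP [].
- by rewrite /= size_rcons.
- have E2 : z :: p1 ++ y :: p2 = (z :: rcons p1 y) ++ p2 by rewrite /= cat_rcons.
  by move: ps; rewrite E2 cat_path => /andP [].
- by rewrite /= last_rcons eS.
Qed.


Lemma behind s : forall u u' v w, tp u v = u' :: s -> tp u' w = u :: tp u w ->
  td v w = td u v + td u w.
Proof.
elim: s => [|u'' s IH] u u' v w H1 H2.
  have := tp_last u v; rewrite H1 /= => E; subst v.
  by rewrite /tdist H1 H2 /= add1n.
case: (tp_cons H1) => euu' H1'; case: (tp_cons H1') => eu'u'' _.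
case: (tp_split w eu'u'') => H3.
  rewrite H2 in H3; case: H3 => Eu _; subst u''.
  by case/and3P: (tp_spec u v); rewrite H1 /= !in_cons eqxx !orbT.
rewrite (IH u' u'' v w H1' H3) /tdist H1 H2 H1' /=; lia.
Qed.

Definition first u w := head u (tp u w).

Lemma first_edge u a : e u a -> first u a = a.
Proof. by move=> H; rewrite /first tp_edge. Qed.

Lemma first_refl u : first u u = u.
Proof. by rewrite /first tp_refl. Qed.

Lemma first_tp u w : u != w -> tp u w = first u w :: tp (first u w) w.
Proof.
move=> uw; case: (tp_ne uw) => y [s H]; rewrite /first H /=.
by case: (tp_cons H) => _ ->.
Qed.

Lemma first_e u w : u != w -> e u (first u w).
Proof. by move=> uw; case: (tp_cons (first_tp uw)). Qed.

Lemma first_ne u w : u != w -> first u w != u.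
Proof. by move=> /first_e H; apply/eqP => E; rewrite E eirr in H. Qed.

Lemma F1 m a w : e m a -> first m w != a -> tp a w = m :: tp m w.
Proof. by move=> ema ne; case: (tp_split w ema) => // H; rewrite /first H eqxx in ne. Qed.

Lemma td_pos u v : u != v -> 0 < td u v.
Proof. by move=> uv; rewrite /tdist (first_tp uv). Qed.

Lemma transfer m z y a : z != m -> first m z = a -> y != z ->
  first z y != first z m -> first m y = a /\ td m y = td m z + td z y.
Proof.
move=> zm fa yz ne.
have ep := first_e zm; have Hz := first_tp zm.
case: (tp_split y ep) => H; first by rewrite /first H eqxx in ne.
have D := behind Hz H; rewrite (td_sym m z) in D.
split => //; apply/eqP; apply: contraT => na.
have mz : m != z by rewrite eq_sym.
have ema := first_e mz; rewrite fa in ema.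
have Hm := first_tp mz; rewrite fa in Hm.
have D2 := behind Hm (F1 ema na).
have := td_pos mz; lia.
Qed.

Lemma stepF u v w : u != v -> td u w = td v w -> tp u w = first u v :: tp (first u v) w.
Proof.
move=> uv D; case: (tp_split w (first_e uv)) => // H.
have D2 := behind (first_tp uv) H; have := td_pos uv; lia.
Qed.

Lemma head_in (x : T) s : head x s \in x :: s.
Proof. by case: s => [|y s]; rewrite /= !in_cons eqxx ?orbT. Qed.

Lemma nofirst_back u x w : tp u w = x :: tp x w -> first x w != u.
Proof.
move=> H; case/and3P: (tp_spec u w); rewrite H /= => /andP [un _] _ _.
apply/eqP => E; move: un; rewrite -E /first; by rewrite head_in.
Qed.

Lemma key (W : {set T}) w0 : w0 \in W -> forall n u v, td u v = n -> u != v ->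
  (forall w, w \in W -> td u w = td v w) ->
  exists m a b, [/\ e m a, e m b, a != b &
     forall w, w \in W -> first m w != a /\ first m w != b].
Proof.
move=> Ww0 n; elim/ltn_ind: n => n IH u v Huv uv HW.
have vu : v != u by rewrite eq_sym.
set u' := first u v; set v' := first v u.
have Su : forall x, x \in W -> tp u x = u' :: tp u' x.
  by move=> x Hx; exact: stepF uv (HW x Hx).
have Sv : forall x, x \in W -> tp v x = v' :: tp v' x.
  by move=> x Hx; exact: (stepF vu (esym (HW x Hx))).
have Du : forall x, x \in W -> td u x = (td u' x).+1 by move=> x Hx; rewrite /tdist Su.
have Dv : forall x, x \in W -> td v x = (td v' x).+1 by move=> x Hx; rewrite /tdist Sv.
have Hu : tp u v = u' :: tp u' v := first_tp uv.
have Hv : tp v u = v' :: tp v' u := first_tp vu.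
have eu : e u u' := first_e uv. have ev : e v v' := first_e vu.
have n1 : n = (td u' v).+1 by rewrite -Huv /tdist Hu.
case: (eqVneq u' v) => [u'v | u'v].
  have := HW w0 Ww0; rewrite Du // -u'v; lia.
have tvu' : td v u' = td u' v by rewrite td_sym.
have p1 := td_pos u'v.
have D' : td u' v' = (td u' v).-1.
  case: (tp_split u' ev) => H.
    by rewrite -tvu' td_sym /tdist H.
  have B := behind Hv H; rewrite /tdist (tp_edge eu) /= in B.
  move: B; rewrite -/(tdist e v u) -/(tdist e v u') tvu' td_sym; lia.
case: (eqVneq u' v') => [e' | ne'].
  exists u', u, v; split.
  - by rewrite eS.
  - by rewrite e' eS.
  - exact: uv.
  move=> w Hw; split; first exact: nofirst_back (Su w Hw).
  by rewrite e'; exact: nofirst_back (Sv w Hw).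
apply: (IH (td u' v')) ne' _ => //; first lia.
by move=> w Hw; have := HW w Hw; rewrite Du // Dv //; case.
Qed.

Lemma res_from_key (W : {set T}) w0 : w0 \in W ->
  (forall m a b, e m a -> e m b -> a != b ->
     ~ (forall w, w \in W -> first m w != a /\ first m w != b)) ->
  resolving (udist e) W.
Proof.
move=> Ww0 H; apply/forallP => u; apply/forallP => v; apply/implyP => /forall_inP Hd.
apply: contraT => uv.
have HW : forall w, w \in W -> td u w = td v w.
  by move=> w Hw; have := Hd w Hw; rewrite /udist eqz_nat => /eqP.
case: (key Ww0 (erefl _) uv HW) => m [a [b [ema emb ab Hf]]].
by case: (H m a b ema emb ab).
Qed.

Lemma three_nb m a b c : e m a -> e m b -> e m c -> a != b -> a != c -> b != c -> major e m.
Proof.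
move=> ema emb emc ab ac bc; rewrite /major /deg (cardsD1 a) (cardsD1 b) (cardsD1 c) !inE.
by rewrite ema emb emc (eq_sym b a) ab (eq_sym c b) bc (eq_sym c a) ac.
Qed.

Lemma two_other z p : major e z -> exists c1 c2, [/\ e z c1, e z c2, c1 != c2, c1 != p & c2 != p].
Proof.
rewrite /major /deg (cardsD1 p) => H.
have H1 : 0 < #|[set w | e z w] :\ p| by move: H; case: (p \in _) => /=; lia.
case/card_gt0P: H1 => c1 Hc1.
move: H; rewrite (cardsD1 c1) Hc1 => H.
have H2 : 0 < #|[set w | e z w] :\ p :\ c1| by move: H; case: (p \in _) => /=; lia.
case/card_gt0P: H2 => c2; rewrite !inE => /and3P [c21 c2p ec2].
move: Hc1; rewrite !inE => /andP [c1p ec1].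
by exists c1, c2; split => //; rewrite eq_sym.
Qed.

Lemma leaf_in z a : e z a -> exists x, [/\ x != z, first z x = a & forall y, e x y -> y = first x z].
Proof.
move=> eza.
have az : a != z by apply/eqP => E; rewrite E eirr in eza.
have Pa : (a != z) && (first z a == a) by rewrite az first_edge // eqxx.
case: (@arg_maxnP _ a (fun x => (x != z) && (first z x == a)) (fun x => td z x) Pa) => x /andP [xz /eqP fx] Hmax.
exists x; split => // y exy; apply/eqP; apply: contraT => ny.
have yx : y != x by apply/eqP => E; rewrite E eirr in exy.
have fy : first x y = y := first_edge exy.
case: (transfer xz fx yx _); first by rewrite fy.
move=> fzy D.
have yz : y != z by apply/eqP => E; move: fzy; rewrite E first_refl => E2; rewrite E2 eqxx in az.
have := Hmax y; rewrite /= yz fzy eqxx D /tdist (tp_edge exy) /= => /(_ isT); lia.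
Qed.

Lemma ext_of z a : major e z -> e z a -> (forall x, first z x = a -> ~~ major e x) ->
  exterior_major e z.
Proof.
move=> mz eza Hmf; rewrite /exterior_major mz /=; apply/existsP.
case: (leaf_in eza) => x [xz fx Hl]; exists x.
have zx : z != x by rewrite eq_sym.
rewrite /terminal mz /=; apply/andP; split.
  rewrite /leaf /deg.
  have -> : [set w | e x w] = [set first x z].
    apply/setP => y; rewrite !inE; apply/idP/eqP => [/Hl //|->]; exact: first_e.
  by rewrite cards1.
apply/forallP => w; apply/implyP => /andP [mw wz].
have fw : first z w != a by apply/eqP => fw; have := Hmf w fw; rewrite mw.
have H := F1 eza fw.
have Hz := first_tp zx; rewrite fx in Hz.
have B := behind Hz H.
have := td_pos (_ : z != w); rewrite eq_sym wz => /(_ isT).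
rewrite (td_sym z x); lia.
Qed.

Lemma deep_nomajor (u v : T) : (forall y, ~~ major e y) -> u != v ->
  exists x, resolving (udist e) [set x].
Proof.
move=> nm uv; case: (leaf_in (first_e uv)) => x [xu fx Hl]; exists x.
apply: (@res_from_key _ x); first by rewrite inE.
move=> m a b ema emb ab H.
case: (eqVneq m x) => [mx|mx].
  by subst m; move: ab; rewrite (Hl a ema) (Hl b emb) eqxx.
have [H1 H2] := H x (set11 x).
by have := nm m; rewrite (three_nb ema emb (first_e mx) ab) // eq_sym.
Qed.

Section Signed.
Variable neg : T -> T -> bool.
Hypothesis nsig : signature e neg.

Lemma path_sign_cons a m s : path_sign neg a (m :: s) = (esign neg a m * path_sign neg m s)%R.
Proof. by rewrite /path_sign /= big_cons. Qed.

Lemma absz_path_sign u s : `|path_sign neg u s|%N = 1.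
Proof.
elim: s u => [|x s IH] u; first by rewrite /path_sign /= big_nil.
by rewrite path_sign_cons abszM IH /esign; case: (neg u x).
Qed.

Lemma absz_sdist u w : `|sdist e neg u w|%N = td u w.
Proof. by rewrite /sdist abszM absz_path_sign absz_nat mul1n. Qed.

Lemma signed_eq (W : {set T}) m a b : e m a -> e m b -> neg m a = neg m b ->
  (forall w, w \in W -> first m w != a /\ first m w != b) ->
  forall w, w \in W -> sdist e neg a w = sdist e neg b w.
Proof.
move=> ema emb nab H w Hw; case: (H w Hw) => na nb.
rewrite /sdist /tdist (F1 ema na) (F1 emb nb) !path_sign_cons /esign.
rewrite -(nsig ema) -(nsig emb) nab.
by rewrite eS in ema; rewrite eS in emb.
Qed.

Variable W : {set T}.
Hypothesis Wres : resolving (sdist e neg) W.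

Lemma signed_res m a b : e m a -> e m b -> neg m a = neg m b ->
  (forall w, w \in W -> first m w != a /\ first m w != b) -> a = b.
Proof.
move=> ema emb nab H; apply/eqP.
move: Wres => /forallP/(_ a)/forallP/(_ b)/implyP; apply.
apply/forall_inP => w Hw; apply/eqP; exact: signed_eq H w Hw.
Qed.

Definition freeW m a := [forall w in W, first m w != a].

Lemma at_most_two m a b c : e m a -> e m b -> e m c -> freeW m a -> freeW m b -> freeW m c ->
  [|| a == b, a == c | b == c].
Proof.
move=> ema emb emc /forall_inP fa /forall_inP fb /forall_inP fc.
have G x y : e m x -> e m y -> freeW m x -> freeW m y -> neg m x = neg m y -> x == y.
  move=> emx emy /forall_inP fx /forall_inP fy nxy; apply/eqP.
  by apply: (signed_res emx emy nxy) => w Hw; split; [apply: fx|apply: fy].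
have Fa : freeW m a by apply/forall_inP.
have Fb : freeW m b by apply/forall_inP.
have Fc : freeW m c by apply/forall_inP.
case Ea: (neg m a); case Eb: (neg m b); case Ec: (neg m c).
- by rewrite (G a b) //; rewrite Ea Eb.
- by rewrite (G a b) //; rewrite Ea Eb.
- by rewrite (G a c) ?orbT //; rewrite Ea Ec.
- by rewrite (G b c) ?orbT //; rewrite Eb Ec.
- by rewrite (G b c) ?orbT //; rewrite Eb Ec.
- by rewrite (G a c) ?orbT //; rewrite Ea Ec.
- by rewrite (G a b) //; rewrite Ea Eb.
- by rewrite (G a b) //; rewrite Ea Eb.
Qed.

Definition good z a := [&& e z a, freeW z a & [forall x, (first z x == a) ==> ~~ major e x]].
Definition Zset := [set z | major e z && [exists a, exists b, (a != b) && good z a && good z b]].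
Definition fsel z := odflt z [pick a | good z a].
Definition W' := W :|: [set fsel z | z in Zset].

Lemma Z_ext : Zset \subset [set v | exterior_major e v].
Proof.
apply/subsetP => z; rewrite !inE => /andP [mz /existsP [a /existsP [b /andP [/andP [_ ga] _]]]].
case/and3P: ga => eza _ /forallP Hmf.
by apply: (ext_of mz eza) => x fx; have := Hmf x; rewrite fx eqxx.
Qed.

Lemma card_W' : #|W'| <= #|W| + ext e.
Proof.
rewrite /W' (leq_trans (leq_card_setU _ _).1) // leq_add2l /ext.
by rewrite (leq_trans (leq_imset_card _ _)) // subset_leq_card // Z_ext.
Qed.

Lemma Zcontra z c1 c2 : z \in Zset -> e z c1 -> e z c2 -> c1 != c2 ->
  (forall w, w \in W' -> first z w != c1 /\ first z w != c2) -> False.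
Proof.
move=> zZ ec1 ec2 c12 H.
have: [exists a, good z a].
  move: zZ; rewrite inE => /andP [_ /existsP [a /existsP [b /andP [/andP [_ ga] _]]]].
  by apply/existsP; exists a.
case/existsP => a0 ga0.
have fz : good z (fsel z) by rewrite /fsel; case: pickP => [a -> //|/(_ a0)]; rewrite ga0.
have Wf : fsel z \in W' by rewrite /W' inE; apply/orP; right; apply: imset_f.
case/and3P: fz => ea fa _.
have HW c : e z c -> (forall w, w \in W' -> first z w != c) -> freeW z c.
  move=> _ Hc; apply/forall_inP => w Hw; apply: Hc; rewrite /W' inE Hw.
  done.
have f1 := HW c1 ec1 (fun w Hw => (H w Hw).1).
have f2 := HW c2 ec2 (fun w Hw => (H w Hw).2).
have [H1 H2] := H _ Wf; rewrite first_edge // in H1 H2.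
by case/or3P: (at_most_two ea ec1 ec2 fa f1 f2) => /eqP E; [rewrite E eqxx in H1|rewrite E eqxx in H2|rewrite E eqxx in c12].
Qed.

Lemma Wsub w : w \in W -> w \in W'.
Proof. by move=> Hw; rewrite /W' inE Hw. Qed.

Lemma deep m a : e m a -> (forall w, w \in W' -> first m w != a) ->
  (exists y, first m y = a /\ major e y) -> False.
Proof.
move=> ema Hf [y0 [fy0 my0]].
have am : a != m by apply/eqP => E; rewrite E eirr in ema.
have y0m : y0 != m.
  by apply/eqP => E; move: fy0; rewrite E first_refl => E2; rewrite E2 eqxx in am.
have P0 : [&& y0 != m, first m y0 == a & major e y0] by rewrite y0m fy0 eqxx my0.
case: (@arg_maxnP _ y0 (fun y => [&& y != m, first m y == a & major e y]) (fun y => td m y) P0)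
  => z /and3P [zm /eqP fz mz] Hmax.
case: (two_other (first z m) mz) => c1 [c2 [ec1 ec2 c12 c1p c2p]].
have T1 c : e z c -> c != first z m -> forall y, first z y = c ->
    [/\ first m y = a, td m y = td m z + td z y & y != z].
  move=> ec cp y fy.
  have yz : y != z.
    by apply/eqP => E; move: fy ec; rewrite E first_refl => ->; rewrite eirr.
  have fne : first z y != first z m by rewrite fy.
  by case: (transfer zm fz yz fne) => A B; split.
have G c : e z c -> c != first z m -> good z c.
  move=> ec cp; rewrite /good ec /=; apply/andP; split.
    apply/forall_inP => w Hw; apply/eqP => fw; case: (T1 c ec cp w fw) => A _ _.
    by have := Hf w (Wsub Hw); rewrite A eqxx.
  apply/forallP => x; apply/implyP => /eqP fx; apply/negP => mx.
  case: (T1 c ec cp x fx) => A B C.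
  have xm : x != m.
    by apply/eqP => E; move: A; rewrite E first_refl => E2; rewrite E2 eqxx in am.
  have H1 : td m x <= td m z by apply: (Hmax x); rewrite xm A eqxx mx.
  have H2 : 0 < td z x by apply: td_pos; rewrite eq_sym.
  by move: H1; rewrite B -{2}(addn0 (td m z)) leq_add2l leqn0 => /eqP E; rewrite E in H2.
have zZ : z \in Zset.
  rewrite inE mz; apply/existsP; exists c1; apply/existsP; exists c2.
  by rewrite c12 (G c1) // (G c2).
apply: (Zcontra zZ ec1 ec2 c12) => w Hw; split; apply/eqP => fw.
  by case: (T1 c1 ec1 c1p w fw) => A _ _; have := Hf w Hw; rewrite A eqxx.
by case: (T1 c2 ec2 c2p w fw) => A _ _; have := Hf w Hw; rewrite A eqxx.
Qed.

Lemma W'_res w0 : w0 \in W -> (exists y, major e y) -> resolving (udist e) W'.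
Proof.
move=> Ww0 Hmaj; apply: (@res_from_key _ w0); first exact: Wsub.
move=> m a b ema emb ab H.
case: (boolP [exists y, (first m y == a) && major e y]) => [/existsP [y /andP [/eqP fy my]] | na].
  by apply: (deep ema (fun w Hw => (H w Hw).1)); exists y.
case: (boolP [exists y, (first m y == b) && major e y]) => [/existsP [y /andP [/eqP fy my]] | nb].
  by apply: (deep emb (fun w Hw => (H w Hw).2)); exists y.
have mfa x : first m x = a -> ~~ major e x.
  by move=> fx; apply/negP => mx; case/existsP: na; exists x; rewrite fx eqxx mx.
have mfb x : first m x = b -> ~~ major e x.
  by move=> fx; apply/negP => mx; case/existsP: nb; exists x; rewrite fx eqxx mx.
case: (boolP (major e m)) => mm.
  have mZ : m \in Zset.
    rewrite inE mm; apply/existsP; exists a; apply/existsP; exists b.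
    rewrite ab /good ema emb /=; apply/and3P; split; first (apply/andP; split).
    - by apply/forall_inP => w Hw; exact: (H w (Wsub Hw)).1.
    - by apply/forallP => x; apply/implyP => /eqP /mfa.
    - by apply/forall_inP => w Hw; exact: (H w (Wsub Hw)).2.
    - by apply/forallP => x; apply/implyP => /eqP /mfb.
  exact: (Zcontra mZ ema emb ab H).
case: Hmaj => y my.
case: (eqVneq m y) => [E|my']; first by rewrite E my in mm.
have emc := first_e my'.
case: (eqVneq (first m y) a) => [ca|ca]; first by have := mfa y ca; rewrite my.
case: (eqVneq (first m y) b) => [cb|cb]; first by have := mfb y cb; rewrite my.
by have := three_nb ema emb emc ab (ltac:(by rewrite eq_sym)) (ltac:(by rewrite eq_sym)); rewrite (negbTE mm).
Qed.

End Signed.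

End Tree.

Lemma bigmin_le (I : eqType) (r : seq I) (P : pred I) (F : I -> nat) n j :
  j \in r -> P j -> \big[minn/n]_(i <- r | P i) F i <= F j.
Proof.
elim: r => // x r IH; rewrite in_cons big_cons => /orP [/eqP <-|jr] Pj.
  by rewrite Pj geq_minl.
case: (P x); last exact: IH.
exact: leq_trans (geq_minr _ _) (IH jr Pj).
Qed.

Lemma mdim_le (T : finType) (d : T -> T -> int) W : resolving d W -> mdim d <= #|W|.
Proof. by move=> H; rewrite /mdim; apply: bigmin_le => //; rewrite mem_index_enum. Qed.

Lemma mdim_leT (T : finType) (d : T -> T -> int) : mdim d <= #|T|.
Proof.
rewrite /mdim; apply: (@big_ind _ (fun x => x <= #|T|)) => //.
  by move=> x y Hx _; rewrite (leq_trans (geq_minl _ _)).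
by move=> W _; apply: max_card.
Qed.

Lemma mdim_spec (T : finType) (d : T -> T -> int) :
  mdim d = #|T| \/ exists2 W, resolving d W & #|W| = mdim d.
Proof.
rewrite /mdim; apply: (@big_ind _ (fun x => x = #|T| \/ exists2 W, resolving d W & #|W| = x)).
- by left.
- move=> x y Hx Hy; case: (leqP x y) => h.
    by [].
  by [].
- by move=> W HW; right; exists W.
Qed.

Theorem theorem4p4 (T : finType) (e : rel T) (neg : T -> T -> bool) :
  is_tree e -> signature e neg ->
  (mdim (udist e) <= mdim (sdist e neg) + ext e)%N /\
  (mdim (sdist e neg) <= mdim (udist e))%N.
Proof.
move=> [[eS eirr] econn eacyc] nsig; split.
  case: (mdim_spec (sdist e neg)) => [->|[W Wres HW]].
    by rewrite (leq_trans (mdim_leT _)) // leq_addr.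
  rewrite -HW.
  case: (boolP [exists u : T, exists v : T, u != v]) => [/existsP [u /existsP [v uv]] | nuv].
    case: (set_0Vmem W) => [W0 | [w0 Ww0]].
      move: Wres; rewrite W0 => /forallP/(_ u)/forallP/(_ v)/implyP H.
      by move: uv; rewrite H //; apply/forall_inP => w; rewrite inE.
    case: (boolP [exists y : T, major e y]) => [/existsP Hm | nm].
      have R := W'_res eS eirr econn eacyc nsig Wres Ww0 Hm.
      exact: leq_trans (mdim_le R) (card_W' eS eirr econn eacyc W).
    have nm' : forall y, ~~ major e y by move=> y; apply/negP => my; case/existsP: nm; exists y.
    case: (deep_nomajor eS eirr econn eacyc nm' uv) => x R.
    rewrite (leq_trans (mdim_le R)) // cards1 (leq_trans _ (leq_addr _ _)) //.
    by apply/card_gt0P; exists w0.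
  have R : resolving (udist e) set0.
    apply/forallP => u; apply/forallP => v; apply/implyP => _.
    by apply: contraT => uv; case/existsP: nuv; exists u; apply/existsP; exists v.
  by rewrite (leq_trans (mdim_le R)) // cards0.
case: (mdim_spec (udist e)) => [->|[W Wres HW]]; first exact: mdim_leT.
rewrite -HW; apply: mdim_le.
apply/forallP => u; apply/forallP => v; apply/implyP => /forall_inP H.
move: Wres => /forallP/(_ u)/forallP/(_ v)/implyP; apply.
apply/forall_inP => w Hw; have /eqP E := H w Hw.
by rewrite /udist -!(absz_sdist e neg) E.
Qed.
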